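(* Let $m \ge 1$ and $n \ge 2m+1$ be integers. Then for every real $r$ with $|r|<1$, $$\int_{-1}^1 \frac{T_n(s)(1-s^2)^{m-\frac{1}{2}}}{(s-r)^2}\,ds = \pi(-1)^{m+1}\left(\frac{1}{2}\right)^{2m-1}\sum_{j=0}^{2m-1}(-1)^j\binom{2m-1}{j}(n+1-2m+2j)\,U_{n-2m+2j}(r),$$ where the integral is a Hadamard finite-part integral.
   Context: $T_k(s)=\cos(k\cos^{-1}s)$ and $U_k(s)=\frac{\sin((k+1)\cos^{-1}s)}{\sin(\cos^{-1}s)}$ are the Tchebyshev polynomials of the first and second kinds. For a positive integer $\alpha\ge 2$ and $|r|<1$, the integral $\int_{-1}^1 \frac{D(s)}{(s-r)^\alpha}ds$ is understood in the Hadamard finite-part sense; in particular it satisfies $\int_{-1}^1 \frac{D(s)}{(s-r)^{\alpha}}ds=\frac{1}{\alpha-1}\frac{d}{dr}\int_{-1}^1\frac{D(s)}{(s-r)^{\alpha-1}}ds$, where for $\alpha-1=1$ the right-hand integral is a Cauchy principal value. $\binom{a}{j}=\frac{a!}{j!(a-j)!}$. *)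

(* Defs.v *)
From Stdlib Require Import Reals.
From Coquelicot Require Import Coquelicot.
Open Scope R_scope.

Definition chebT (k : nat) (s : R) : R := cos (INR k * acos s).
Definition chebU (k : nat) (s : R) : R := sin ((INR k + 1) * acos s) / sin (acos s).

Definition pv_trunc (D : R -> R) (r eps : R) : R :=
  RInt (fun s => D s / (s - r)) (-1) (r - eps) + RInt (fun s => D s / (s - r)) (r + eps) 1.

Definition is_CPV (D : R -> R) (r l : R) : Prop :=
  filterlim (fun eps => pv_trunc D r eps) (at_right 0) (locally l).

Definition CPV (D : R -> R) (r : R) : R := iota (is_CPV D r).

(* l is the Hadamard finite-part integral int_{-1}^1 D(s)/(s-r)^2 ds, i.e.
   the principal value exists for all points of (-1,1) and
   l = d/dr of the principal value int_{-1}^1 D(s)/(s-r) ds (alpha = 2). *)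
Definition is_hadamard2 (D : R -> R) (r l : R) : Prop :=
  (forall x, -1 < x < 1 -> exists v, is_CPV D x v) /\
  is_derive (fun x => CPV D x) r l.

(* Main.v *)
Require Import Defs.
From Stdlib Require Import Reals Lra Lia.
From Coquelicot Require Import Coquelicot.
Open Scope R_scope.

Fixpoint bin (n k : nat) : R :=
  match n, k with
  | O, O => 1
  | O, S _ => 0
  | S _, O => 1
  | S n', S k' => bin n' k' + bin n' (S k')
  end.

Lemma bin_gt n k : (n < k)%nat -> bin n k = 0.
Proof.
  revert k; induction n as [|n IH]; intros [|k] H; simpl; try lia; auto.
  rewrite !IH; try lia; ring.
Qed.

Lemma C_nn n : Binomial.C n n = 1.
Proof. unfold Binomial.C. rewrite Nat.sub_diag. simpl (Factorial.fact 0). rewrite Rmult_1_r. field. apply INR_fact_neq_0. Qed.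

Lemma bin_C n k : (k <= n)%nat -> bin n k = Binomial.C n k.
Proof.
  revert k; induction n as [|n IH]; intros [|k] H.
  - simpl. unfold Binomial.C. simpl. field.
  - lia.
  - simpl. unfold Binomial.C. replace (S n - 0)%nat with (S n) by lia. simpl (Factorial.fact 0). rewrite Rmult_1_l. field. apply INR_fact_neq_0.
  - simpl. destruct (Nat.eq_dec k n) as [->|Hk].
    + rewrite (bin_gt n (S n)) by lia. rewrite IH by lia. rewrite !C_nn. ring.
    + rewrite !IH by lia. apply Binomial.pascal. lia.
Qed.

Lemma sum_opp (f : nat -> R) N : sum_f_R0 (fun i => - f i) N = - sum_f_R0 f N.
Proof. induction N; simpl; [ring| rewrite IHN; ring]. Qed.

Lemma sum_plus' (f g : nat -> R) N : sum_f_R0 (fun i => f i + g i) N = sum_f_R0 f N + sum_f_R0 g N.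
Proof. induction N; simpl; [ring| rewrite IHN; ring]. Qed.

Lemma binsum_step p (g : nat -> R) :
  sum_f_R0 (fun j => bin (S p) j * g j) (S p) =
  sum_f_R0 (fun j => bin p j * g j) p + sum_f_R0 (fun j => bin p j * g (S j)) p.
Proof.
  rewrite decomp_sum by lia. simpl pred.
  replace (bin (S p) 0 * g 0%nat) with (g 0%nat) by (simpl; ring).
  rewrite (sum_eq (fun i => bin (S p) (S i) * g (S i))
     (fun i => bin p i * g (S i) + bin p (S i) * g (S i))) by (intros; simpl; ring).
  rewrite sum_plus'.
  assert (E : sum_f_R0 (fun j => bin p j * g j) p = g 0%nat + sum_f_R0 (fun i => bin p (S i) * g (S i)) p).
  { destruct p as [|q].
    - simpl. ring.
    - rewrite decomp_sum by lia. simpl pred. simpl (bin (S q) 0).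
      rewrite tech5. rewrite (bin_gt (S q) (S (S q))) by lia. ring. }
  rewrite E. ring.
Qed.

Lemma trig_sum p (a t : R) :
  sum_f_R0 (fun j => (-1) ^ j * bin p j * sin ((a - INR p + 2 * INR j) * t)) p =
  2 ^ p * sin t ^ p * sin (a * t - INR p * (PI / 2)).
Proof.
  revert a; induction p as [|p IH]; intros a.
  - simpl. replace ((a - 0 + 2 * 0) * t) with (a*t) by ring. replace (a * t - 0 * (PI / 2)) with (a*t) by ring. ring.
  - rewrite (sum_eq _ (fun j => bin (S p) j * ((-1)^j * sin ((a - INR (S p) + 2 * INR j) * t))))
      by (intros; ring).
    rewrite binsum_step.
    rewrite (sum_eq _ (fun j => (-1) ^ j * bin p j * sin ((a - 1 - INR p + 2 * INR j) * t)))
      by (intros; rewrite S_INR; replace (a - (INR p + 1)) with (a - 1 - INR p) by ring; ring).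
    rewrite (sum_eq (fun j => bin p j * ((-1) ^ S j * sin ((a - INR (S p) + 2 * INR (S j)) * t)))
       (fun j => - ((-1) ^ j * bin p j * sin ((a + 1 - INR p + 2 * INR j) * t))))
      by (intros; rewrite !S_INR; simpl pow;
          replace (a - (INR p + 1) + 2 * (INR i + 1)) with (a + 1 - INR p + 2 * INR i) by ring; ring).
    rewrite sum_opp, !IH.
    rewrite S_INR.
    replace ((a - 1) * t - INR p * (PI / 2)) with ((a * t - INR p * (PI / 2)) - t) by ring.
    replace ((a + 1) * t - INR p * (PI / 2)) with ((a * t - INR p * (PI / 2)) + t) by ring.
    replace (a * t - (INR p + 1) * (PI / 2)) with ((a * t - INR p * (PI / 2)) - PI/2) by ring.
    set (u := a * t - INR p * (PI / 2)).
    rewrite sin_minus, sin_plus, sin_minus, sin_PI2, cos_PI2. simpl pow. ring.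
Qed.

Lemma acos_ge1 y : 1 <= y -> acos y = 0.
Proof. intros H. unfold acos. destruct (Rle_dec y (-1)); [lra|]. destruct (Rle_dec 1 y); lra. Qed.
Lemma acos_lem1 y : y <= -1 -> acos y = PI.
Proof. intros H. unfold acos. destruct (Rle_dec y (-1)); lra. Qed.

Lemma acos_cont1 : continuous acos 1.
Proof.
  apply continuity_pt_filterlim.
  unfold continuity_pt, continue_in, limit1_in, limit_in. intros eps Heps.
  set (e := Rmin eps PI / 2).
  assert (He : 0 < e < PI).
  { unfold e. pose proof PI_RGT_0. pose proof (Rmin_l eps PI). pose proof (Rmin_r eps PI).
    assert (0 < Rmin eps PI) by (apply Rmin_glb_lt; lra). lra. }
  assert (Hce : cos e < 1).
  { rewrite <- cos_0. apply cos_decreasing_1; lra. }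
  exists (1 - cos e). split; [lra|].
  intros y [_ Hy]. simpl in Hy |- *. unfold R_dist in *. rewrite acos_1.
  destruct (Rle_dec 1 y) as [H1|H1].
  - rewrite acos_ge1 by lra. replace (0-0) with 0 by ring. rewrite Rabs_R0. lra.
  - assert (Hy' : cos e < y) by (rewrite Rabs_left in Hy; lra).
    pose proof (COS_bound e).
    pose proof (acos_bound y).
    assert (acos y < e).
    { apply cos_decreasing_0; try lra. rewrite cos_acos; lra. }
    rewrite Rminus_0_r, Rabs_right by lra.
    assert (e <= eps) by (unfold e; pose proof (Rmin_l eps PI); pose proof (Rmin_r eps PI);
       assert (0 < Rmin eps PI) by (apply Rmin_glb_lt; lra); lra).
    lra.
Qed.

Lemma is_derive_acos x : -1 < x < 1 -> is_derive acos x (-1 / sqrt (1 - x^2)).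
Proof.
  intros H. apply is_derive_Reals.
  apply (derive_pt_eq_1 _ _ _ (derivable_pt_acos x H)).
  rewrite derive_pt_acos. unfold Rsqr. replace (x^2) with (x*x) by ring. reflexivity.
Qed.

Lemma acos_cont x : continuous acos x.
Proof.
  destruct (Rlt_le_dec x (-1)) as [H|H].
  - apply continuous_ext_loc with (fun _ => PI).
    + exists (mkposreal _ (ltac:(lra) : 0 < -1 - x)). intros y Hy.
      unfold ball in Hy; simpl in Hy; unfold AbsRing_ball, abs, minus, plus, opp in Hy; simpl in Hy.
      apply Rabs_lt_between in Hy. rewrite acos_lem1; lra.
    + apply continuous_const.
  - destruct (Rle_lt_or_eq_dec _ _ H) as [H'|H'].
    + destruct (Rlt_le_dec x 1) as [H2|H2].
      * apply (@ex_derive_continuous R_AbsRing R_NormedModule acos x). eexists. apply is_derive_acos. lra.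
      * destruct (Rle_lt_or_eq_dec _ _ H2) as [H3|H3].
        -- apply continuous_ext_loc with (fun _ => 0).
           ++ exists (mkposreal _ (ltac:(lra) : 0 < x - 1)). intros y Hy.
              unfold ball in Hy; simpl in Hy; unfold AbsRing_ball, abs, minus, plus, opp in Hy; simpl in Hy.
              apply Rabs_lt_between in Hy. rewrite acos_ge1; lra.
           ++ apply continuous_const.
        -- subst. apply acos_cont1.
    + subst x. apply continuous_ext_loc with (fun y => PI - acos (- y)).
      * apply filter_forall. intros y. cbv beta. rewrite acos_opp. lra.
      * apply continuity_pt_filterlim.
        apply continuity_pt_minus. apply continuity_pt_const. intros u v; reflexivity.
        apply (continuity_pt_comp Ropp acos). apply continuity_pt_opp, continuity_pt_id.
        apply continuity_pt_filterlim. replace (- -1) with 1 by ring. apply acos_cont1.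
Qed.

Fixpoint Up (k : nat) (s : R) : R :=
  match k with
  | O => 1
  | S k' => match k' with
            | O => 2 * s
            | S k'' => 2 * s * Up k' s - Up k'' s
            end
  end.

Definition P (k : nat) (s : R) : R := sqrt (1 - s ^ 2) * Up k s.

Lemma Up_SS k s : Up (S (S k)) s = 2 * s * Up (S k) s - Up k s.
Proof. reflexivity. Qed.

Lemma P_SS k s : P (S (S k)) s = 2 * s * P (S k) s - P k s.
Proof. unfold P. rewrite Up_SS. ring. Qed.
Lemma P_1 s : P 1 s = 2 * s * P 0 s.
Proof. unfold P. simpl. ring. Qed.

Lemma sqrt_sin s : -1 <= s <= 1 -> sqrt (1 - s ^ 2) = sin (acos s).
Proof. intros H. rewrite sin_acos by lra. unfold Rsqr. f_equal. ring. Qed.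

Lemma P_trig k0 s : -1 <= s <= 1 -> P k0 s = sin (INR (S k0) * acos s).
Proof.
  intros Hs.
  assert (forall k, P k s = sin (INR (S k) * acos s) /\ P (S k) s = sin (INR (S (S k)) * acos s)).
  { intros k; induction k as [|k IH].
    - unfold P; simpl Up. rewrite sqrt_sin by lra. split.
      + simpl INR. rewrite Rmult_1_l. ring.
      + replace (INR 2 * acos s) with (2 * acos s) by (simpl; ring). rewrite sin_2a.
        rewrite cos_acos by lra. ring.
    - destruct IH as [IH1 IH2]. split; [exact IH2|].
      rewrite P_SS, IH1, IH2.
      set (t := acos s). replace s with (cos t) at 1 by (unfold t; apply cos_acos; lra).
      rewrite !S_INR.
      replace ((INR k + 1 + 1 + 1) * t) with ((INR k + 1 + 1) * t + t) by ring.
      replace ((INR k + 1) * t) with ((INR k + 1 + 1) * t - t) by ring.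
      rewrite sin_plus, sin_minus. ring. }
  apply H.
Qed.

Definition nice (f : R -> R) := forall x, continuous f x.

Lemma nice_cpt f : (forall x, continuity_pt f x) -> nice f.
Proof. intros H x. apply continuity_pt_filterlim, H. Qed.

Lemma Up_cont k0 : forall x, continuity_pt (Up k0) x.
Proof.
  assert (forall k, (forall x, continuity_pt (Up k) x) /\ (forall x, continuity_pt (Up (S k)) x)).
  { intros k; induction k as [|k [IH1 IH2]].
    - split; intros x.
      + apply continuity_pt_const; try (intros u v; reflexivity).
      + change (continuity_pt (fun s => 2 * s) x). apply continuity_pt_scal, continuity_pt_id.
    - split; [exact IH2|]. intros x.
      change (continuity_pt (fun s => 2 * s * Up (S k) s - Up k s) x).
      apply continuity_pt_minus; [|apply IH1].
      apply continuity_pt_mult; [|apply IH2]. apply continuity_pt_scal, continuity_pt_id. }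
  apply H.
Qed.

Lemma sq_nice : nice (fun s => sqrt (1 - s ^ 2)).
Proof.
  intros x. apply continuous_sqrt_comp. apply continuity_pt_filterlim.
  apply continuity_pt_minus. apply continuity_pt_const; try (intros u v; reflexivity).
  apply derivable_continuous_pt. apply derivable_pt_pow; try apply derivable_pt_id.
Qed.

Lemma P_nice k : nice (P k).
Proof.
  intros x. unfold P. apply (continuous_mult (fun s => sqrt (1 - s^2)) (Up k)).
  apply sq_nice. apply continuity_pt_filterlim, Up_cont.
Qed.

Lemma clamp_lip a b x y : a <= b ->
  Rabs (Rmax a (Rmin b y) - Rmax a (Rmin b x)) <= Rabs (y - x).
Proof.
  intros Hab. unfold Rmax, Rmin. repeat destruct Rle_dec; unfold Rabs; repeat destruct Rcase_abs; lra.
Qed.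

Lemma clamp_cont a b x : a <= b -> continuity_pt (fun t => Rmax a (Rmin b t)) x.
Proof.
  intros Hab. unfold continuity_pt, continue_in, limit1_in, limit_in. intros eps He.
  exists eps. split; [lra|]. intros y [_ Hy]. simpl in *. unfold R_dist in *.
  eapply Rle_lt_trans; [apply clamp_lip; lra| exact Hy].
Qed.

Lemma FTCo (F f : R -> R) a b : a < b ->
  (forall x, a <= x <= b -> continuous F x) ->
  (forall x, a < x < b -> is_derive F x (f x)) ->
  (forall x, a <= x <= b -> continuous f x) ->
  is_RInt f a b (F b - F a).
Proof.
  intros Hab HF Hd Hf.
  set (cl := fun t => Rmax a (Rmin b t)).
  assert (Hcl : forall t, a <= cl t <= b).
  { intros t; unfold cl, Rmax, Rmin; repeat destruct Rle_dec; lra. }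
  assert (Hcl2 : forall t, a <= t <= b -> cl t = t).
  { intros t Ht; unfold cl, Rmax, Rmin; repeat destruct Rle_dec; lra. }
  set (fe := fun t => f (cl t)).
  assert (Hfe : forall t, continuous fe t).
  { intros t. unfold fe. apply (continuous_comp cl f).
    apply continuity_pt_filterlim, clamp_cont; lra. apply Hf, Hcl. }
  set (I := fun t => RInt fe a t).
  assert (HI : forall t, is_RInt fe a t (I t)).
  { intros t. apply (RInt_correct (V:=R_CompleteNormedModule)), (ex_RInt_continuous (V:=R_CompleteNormedModule)). intros; apply Hfe. }
  assert (HdI : forall t, is_derive I t (fe t)).
  { intros t. apply is_derive_RInt with a. apply filter_forall. intros; apply HI. apply Hfe. }
  destruct (MVT_gen (fun t => I t - F t) a b (fun _ => 0)) as [c [Hc Heq]].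
  - rewrite Rmin_left, Rmax_right by lra. intros x Hx.
    assert (E : fe x = f x) by (unfold fe; rewrite Hcl2; lra).
    replace 0 with (minus (fe x) (f x)) by (rewrite E; unfold minus, plus, opp; simpl; ring).
    apply (is_derive_minus I F). apply HdI. apply Hd; lra.
  - rewrite Rmin_left, Rmax_right by lra. intros x Hx.
    apply continuity_pt_minus; apply continuity_pt_filterlim.
    + apply (ex_derive_continuous (V := R_NormedModule)). eexists; apply HdI.
    + apply HF; lra.
  - assert (Ia : I a = 0) by (unfold I; rewrite RInt_point; reflexivity).
    rewrite Ia in Heq.
    apply is_RInt_ext with fe.
    + rewrite Rmin_left, Rmax_right by lra. intros x Hx. unfold fe; rewrite Hcl2; lra.
    + replace (F b - F a) with (I b) by lra. apply HI.
Qed.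

Lemma RInt_ext_R (f g : R -> R) a b :
  (forall x : R, Rmin a b < x < Rmax a b -> f x = g x) -> RInt f a b = RInt g a b.
Proof. intros H. apply RInt_ext. exact H. Qed.

Lemma at_right_of_locally (phi : R -> R) l :
  filterlim phi (locally 0) (locally l) -> filterlim phi (at_right 0) (locally l).
Proof.
  intros H P HP. specialize (H P HP). destruct H as [d Hd]. exists d. intros y Hy _. apply Hd, Hy.
Qed.

Lemma at_right_small d : 0 < d -> at_right 0 (fun e => 0 < e < d).
Proof.
  intros Hd. exists (mkposreal d Hd). intros y Hy Hy0. split; auto.
  unfold ball in Hy; simpl in Hy; unfold AbsRing_ball, abs, minus, plus, opp in Hy; simpl in Hy.
  apply Rabs_lt_between in Hy. lra.
Qed.

Lemma lim_lin {T} (F : (T -> Prop) -> Prop) {FF : Filter F} (u v : T -> R) A B al be :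
  filterlim u F (locally A) -> filterlim v F (locally B) ->
  filterlim (fun e => al * u e + be * v e) F (locally (al * A + be * B)).
Proof.
  intros Hu Hv.
  apply (filterlim_comp_2 (G := locally (al * A)) (H := locally (be * B)) (fun e => al * u e) (fun e => be * v e) Rplus).
  - apply (filterlim_comp _ _ _ u (fun z => scal al z) F (locally A)); auto.
    apply (filterlim_scal_r al A).
  - apply (filterlim_comp _ _ _ v (fun z => scal be z) F (locally B)); auto.
    apply (filterlim_scal_r be B).
  - apply (filterlim_plus (K := R_AbsRing) (V := R_NormedModule)).
Qed.

Lemma RInt_lin (u v : R -> R) a b al be :
  ex_RInt u a b -> ex_RInt v a b ->
  RInt (fun s => al * u s + be * v s) a b = al * RInt u a b + be * RInt v a b.
Proof.
  intros Hu Hv. apply is_RInt_unique.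
  apply (is_RInt_plus (V:=R_NormedModule) (fun s => al * u s) (fun s => be * v s)).
  - apply (is_RInt_scal (V:=R_NormedModule) u). exact (RInt_correct (V:=R_CompleteNormedModule) _ _ _ Hu).
  - apply (is_RInt_scal (V:=R_NormedModule) v). exact (RInt_correct (V:=R_CompleteNormedModule) _ _ _ Hv).
Qed.



Lemma ex_div_l f x e : nice f -> -1 < x -> 0 < e -> ex_RInt (fun s => f s / (s - x)) (-1) (x - e).
Proof.
  intros Hf Hx He. apply (ex_RInt_continuous (V:=R_CompleteNormedModule)). intros z Hz.
  assert (z < x) by (pose proof (Rmax_lub_lt (-1) (x-e) x ltac:(lra) ltac:(lra)); lra).
  apply (continuous_mult f (fun s => / (s - x))). apply Hf.
  apply continuous_Rinv_comp. apply continuity_pt_filterlim.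
  apply continuity_pt_minus. apply continuity_pt_id. apply continuity_pt_const; intros u w; reflexivity.
  lra.
Qed.

Lemma ex_div_r f x e : nice f -> x < 1 -> 0 < e -> ex_RInt (fun s => f s / (s - x)) (x + e) 1.
Proof.
  intros Hf Hx He. apply (ex_RInt_continuous (V:=R_CompleteNormedModule)). intros z Hz.
  assert (x < z) by (pose proof (Rmin_glb_lt (x+e) 1 x ltac:(lra) ltac:(lra)); lra).
  apply (continuous_mult f (fun s => / (s - x))). apply Hf.
  apply continuous_Rinv_comp. apply continuity_pt_filterlim.
  apply continuity_pt_minus. apply continuity_pt_id. apply continuity_pt_const; intros u w; reflexivity.
  lra.
Qed.

Lemma pv_lin f g x e al be : nice f -> nice g -> -1 < x < 1 -> 0 < e ->
  pv_trunc (fun s => al * f s + be * g s) x e = al * pv_trunc f x e + be * pv_trunc g x e.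
Proof.
  intros Hf Hg Hx He. unfold pv_trunc.
  rewrite (RInt_ext_R _ (fun s => al * (f s / (s - x)) + be * (g s / (s - x)))) by (intros; unfold Rdiv; ring).
  rewrite RInt_lin by (apply ex_div_l; auto; lra).
  rewrite (RInt_ext_R (fun s => (al * f s + be * g s) / (s - x)) (fun s => al * (f s / (s - x)) + be * (g s / (s - x)))) by (intros; unfold Rdiv; ring).
  rewrite RInt_lin by (apply ex_div_r; auto; lra).
  ring.
Qed.

Lemma CPV_lin f g x A B al be : nice f -> nice g -> -1 < x < 1 ->
  is_CPV f x A -> is_CPV g x B -> is_CPV (fun s => al * f s + be * g s) x (al * A + be * B).
Proof.
  intros Hf Hg Hx HA HB. unfold is_CPV.
  apply filterlim_ext_loc with (fun e => al * pv_trunc f x e + be * pv_trunc g x e).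
  - apply filter_imp with (fun e => 0 < e < 1). intros e He. symmetry. apply pv_lin; auto; lra.
    apply at_right_small; lra.
  - apply lim_lin; auto. apply at_right_proper_filter.
Qed.

Lemma CPV_ext f g x A : -1 < x < 1 -> (forall s, -1 <= s <= 1 -> f s = g s) ->
  is_CPV f x A -> is_CPV g x A.
Proof.
  intros Hx Hfg HA. unfold is_CPV.
  apply filterlim_ext_loc with (fun e => pv_trunc f x e); auto.
  apply filter_imp with (fun e => 0 < e < Rmin (1 - x) (1 + x)).
  - intros e He. pose proof (Rmin_l (1-x) (1+x)). pose proof (Rmin_r (1-x) (1+x)).
    unfold pv_trunc. f_equal; apply RInt_ext_R; intros s Hs.
    + rewrite Rmin_left, Rmax_right in Hs by lra. rewrite Hfg; auto; lra.
    + rewrite Rmin_left, Rmax_right in Hs by lra. rewrite Hfg; auto; lra.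
  - apply at_right_small. apply Rmin_glb_lt; lra.
Qed.

Lemma CPV_zero x : is_CPV (fun _ => 0) x 0.
Proof.
  unfold is_CPV.
  apply filterlim_ext with (fun _ => 0).
  - intros e. unfold pv_trunc.
    rewrite !(RInt_ext_R (fun s => 0 / (s - x)) (fun _ => 0)) by (intros; unfold Rdiv; ring).
    rewrite !RInt_const. unfold scal; simpl; unfold mult; simpl. ring.
  - apply filterlim_const.
Qed.

Lemma ex_nice g a b : nice g -> ex_RInt g a b.
Proof. intros H. apply (ex_RInt_continuous (V:=R_CompleteNormedModule)). intros; apply H. Qed.

Lemma plain_lim g x I : nice g -> -1 < x < 1 -> is_RInt g (-1) 1 I ->
  filterlim (fun e => RInt g (-1) (x - e) + RInt g (x + e) 1) (at_right 0) (locally I).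
Proof.
  intros Hg Hx HI.
  set (J := (fun u => RInt g (-1) u) : R -> R).
  assert (HJ : forall u, is_RInt g (-1) u (J u)).
  { intros u. exact (RInt_correct (V:=R_CompleteNormedModule) _ _ _ (ex_nice g (-1) u Hg)). }
  assert (HJc : forall u, continuity_pt J u).
  { intros u. apply continuity_pt_filterlim.
    apply (ex_derive_continuous (V := R_NormedModule)). eexists.
    apply is_derive_RInt with (-1). apply filter_forall. intros; apply HJ. apply Hg. }
  assert (E : forall e, RInt g (x + e) 1 = J 1 - J (x + e)).
  { intros e. pose proof (RInt_Chasles (V:=R_CompleteNormedModule) g (-1) (x+e) 1
      (ex_nice g _ _ Hg) (ex_nice g _ _ Hg)) as H.
    assert (H' : RInt g (-1) (x+e) + RInt g (x+e) 1 = RInt g (-1) 1) by exact H.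
    unfold J. lra. }
  apply filterlim_ext with (fun e => J (x - e) + (J 1 - J (x + e))).
  { intros e. rewrite E. reflexivity. }
  apply at_right_of_locally.
  replace I with (J (x - 0) + (J 1 - J (x + 0))).
  2:{ rewrite Rminus_0_r, Rplus_0_r. replace (J x + (J 1 - J x)) with (J 1) by ring.
      unfold J. apply is_RInt_unique. exact HI. }
  apply (proj1 (continuity_pt_filterlim (fun e => J (x - e) + (J 1 - J (x + e))) 0)).
  apply continuity_pt_plus.
  - apply (continuity_pt_comp (fun e => x - e) J).
    + apply continuity_pt_minus. apply continuity_pt_const; intros u w; reflexivity. apply continuity_pt_id.
    + apply HJc.
  - apply continuity_pt_minus. apply continuity_pt_const; intros u w; reflexivity.
    apply (continuity_pt_comp (fun e => x + e) J).
    + apply continuity_pt_plus. apply continuity_pt_const; intros u w; reflexivity. apply continuity_pt_id.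
    + apply HJc.
Qed.

Lemma RInt_lin3 (u v w : R -> R) a b al be ga :
  ex_RInt u a b -> ex_RInt v a b -> ex_RInt w a b ->
  @eq R (RInt (fun s => al * u s + be * v s + ga * w s) a b) (al * RInt u a b + be * RInt v a b + ga * RInt w a b).
Proof.
  intros Hu Hv Hw.
  rewrite (RInt_ext_R (fun s => al * u s + be * v s + ga * w s) (fun s => 1 * (al * u s + be * v s) + ga * w s)) by (intros; ring).
  rewrite RInt_lin.
  - rewrite RInt_lin by auto. ring.
  - apply (ex_RInt_plus (V:=R_NormedModule) (fun s => al * u s) (fun s => be * v s)).
    apply (ex_RInt_scal (V:=R_NormedModule) u), Hu.
    apply (ex_RInt_scal (V:=R_NormedModule) v), Hv.
  - exact Hw.
Qed.

Lemma CPV_step f g h x A B I : nice f -> nice g -> -1 < x < 1 ->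
  (forall s, h s = 2 * s * g s - f s) ->
  is_CPV g x A -> is_CPV f x B -> is_RInt g (-1) 1 I ->
  is_CPV h x (2 * I + 2 * x * A - B).
Proof.
  intros Hf Hg Hx Hh HA HB HI. unfold is_CPV.
  apply filterlim_ext_loc with
    (fun e => 2 * (RInt g (-1) (x - e) + RInt g (x + e) 1) + 1 * (2 * x * pv_trunc g x e + (-1) * pv_trunc f x e)).
  - apply filter_imp with (fun e => 0 < e < 1); [|apply at_right_small; lra].
    intros e He. unfold pv_trunc.
    rewrite (RInt_ext_R (fun s => h s / (s - x)) (fun s => 2 * g s + (2 * x) * (g s / (s - x)) + (-1) * (f s / (s - x))) (-1) (x - e)).
    2:{ intros s Hs. assert (s < x) by (pose proof (Rmax_lub_lt (-1) (x-e) x ltac:(lra) ltac:(lra)); lra).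
        rewrite Hh. field. lra. }
    rewrite (RInt_ext_R (fun s => h s / (s - x)) (fun s => 2 * g s + (2 * x) * (g s / (s - x)) + (-1) * (f s / (s - x))) (x + e) 1).
    2:{ intros s Hs. assert (x < s) by (pose proof (Rmin_glb_lt (x+e) 1 x ltac:(lra) ltac:(lra)); lra).
        rewrite Hh. field. lra. }
    assert (H1 := ex_nice g (-1) (x - e) Hg).
    assert (H2 := ex_nice g (x + e) 1 Hg).
    assert (H3 := ex_div_l g x e Hg ltac:(lra) ltac:(lra)).
    assert (H4 := ex_div_l f x e Hf ltac:(lra) ltac:(lra)).
    assert (H5 := ex_div_r g x e Hg ltac:(lra) ltac:(lra)).
    assert (H6 := ex_div_r f x e Hf ltac:(lra) ltac:(lra)).
    rewrite (RInt_lin3 g (fun s => g s / (s - x)) (fun s => f s / (s - x)) (-1) (x - e) _ _ _ H1 H3 H4).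
    rewrite (RInt_lin3 g (fun s => g s / (s - x)) (fun s => f s / (s - x)) (x + e) 1 _ _ _ H2 H5 H6).
    ring.
  - replace (2 * I + 2 * x * A - B) with (2 * I + 1 * (2 * x * A + (-1) * B)) by ring.
    apply (lim_lin (at_right 0)); [apply plain_lim; auto | apply (lim_lin (at_right 0)); auto].
Qed.

Definition Kf (x s : R) : R :=
  - sqrt (1 - x^2) * ln (1 - x*s + sqrt (1 - x^2) * sqrt (1 - s^2)) + sqrt (1 - s^2) + x * acos s.

Lemma Wpos x s : -1 < x < 1 -> -1 <= s <= 1 -> 0 < 1 - x*s + sqrt (1 - x^2) * sqrt (1 - s^2).
Proof.
  intros Hx Hs. assert (0 <= sqrt (1 - x^2) * sqrt (1 - s^2)) by (apply Rmult_le_pos; apply sqrt_pos).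
  assert (x * s < 1).
  { destruct (Rle_dec 0 s).
    - assert (x * s <= Rabs x * s) by (apply Rmult_le_compat_r; [lra| apply RRle_abs]).
      assert (Rabs x * s <= Rabs x * 1) by (apply Rmult_le_compat_l; [apply Rabs_pos|lra]).
      assert (Rabs x < 1) by (apply Rabs_def1; lra). lra.
    - assert (x * s = (-x) * (-s)) by ring.
      assert ((-x) * (-s) <= Rabs x * (-s)) by (apply Rmult_le_compat_r; [lra| rewrite <- Rabs_Ropp; apply RRle_abs]).
      assert (Rabs x * (-s) <= Rabs x * 1) by (apply Rmult_le_compat_l; [apply Rabs_pos|lra]).
      assert (Rabs x < 1) by (apply Rabs_def1; lra). lra. }
  lra.
Qed.

Lemma alg x s c w : c*c = 1 - x^2 -> w*w = 1 - s^2 -> 0 < w -> 0 < 1 - x*s + c*w -> s - x <> 0 ->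
  c * / (s - x) - c * ((- x + c * (- (2 * s) / (2 * w))) / (1 - x*s + c*w)) - (2*s)/(2*w) + x * (-1 / w)
  = w * 1 / (s - x).
Proof.
  intros Hc Hw Hw0 HW Hsx.
  assert (w <> 0) by lra. assert (1 - x*s + c*w <> 0) by lra.
  field_simplify_eq; [|tauto].
  assert (E1 : c^2 = 1 - x^2) by (rewrite <- Hc; ring).
  assert (E2 : w^2 = 1 - s^2) by (rewrite <- Hw; ring).
  assert (E3 : w^3 = w * (1 - s^2)) by (rewrite <- Hw; ring).
  rewrite ?E1, ?E2, ?E3. ring.
Qed.

Lemma HK_derive x sg s : -1 < x < 1 -> -1 < s < 1 -> 0 < sg * (s - x) -> sg * sg = 1 ->
  is_derive (fun s => sqrt (1 - x^2) * ln (sg * (s - x)) + Kf x s) s (P 0 s / (s - x)).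
Proof.
  intros Hx Hs Hsg Hsg2.
  set (c := sqrt (1 - x^2)).
  assert (Hc0 : 0 < 1 - x^2) by nra.
  assert (Hs0 : 0 < 1 - s^2) by nra.
  assert (HW := Wpos x s Hx ltac:(lra)). fold c in HW.
  evar (dA : R).
  assert (H1 : is_derive (fun s => c * ln (sg * (s - x)) - c * ln (1 - x*s + c * sqrt (1 - s^2)) + sqrt (1 - s^2)) s dA).
  { auto_derive.
    - replace (s + - x) with (s - x) by ring. replace (1 + - (s * (s * 1))) with (1 - s^2) by ring.
      replace (1 + - (x * s)) with (1 - x * s) by ring. repeat split; lra.
    - unfold dA. reflexivity. }
  assert (H2 := is_derive_acos s Hs).
  assert (H3 := is_derive_plus _ _ _ _ _ H1 (is_derive_scal _ _ x _ H2)).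
  assert (Heq : @eq R (plus dA (scal x (-1 / sqrt (1 - s ^ 2)))) (P 0 s / (s - x))).
  { unfold dA, plus, scal; simpl; unfold mult; simpl.
    unfold P; simpl Up.
    replace (1 + - (s * (s * 1))) with (1 - s^2) by ring.
    replace (1 + - (x * s)) with (1 - x * s) by ring.
    replace (s + - x) with (s - x) by ring.
    replace (1 - s * (s * 1)) with (1 - s^2) by ring.
    set (w := sqrt (1 - s^2)) in *.
    assert (Hw : w * w = 1 - s^2) by (apply sqrt_sqrt; lra).
    assert (Hw0 : 0 < w) by (apply sqrt_lt_R0; lra).
    assert (Hc : c * c = 1 - x^2) by (apply sqrt_sqrt; lra).
    rewrite <- (alg x s c w Hc Hw Hw0 HW ltac:(nra)).
    field. repeat split; try lra; intro Hz; rewrite Hz in Hsg; lra. }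
  rewrite <- Heq.
  eapply is_derive_ext; [|apply H3].
  intros t. unfold Kf, plus, scal; simpl; unfold mult; simpl. unfold c. replace (1 - x * (x * 1)) with (1 - x^2) by ring. ring.
Qed.

Lemma cpt_const (c x : R) : continuity_pt (fun _ => c) x.
Proof. apply continuity_pt_const. intros u v; reflexivity. Qed.

Lemma sq_cpt x : continuity_pt (fun s => sqrt (1 - s ^ 2)) x.
Proof. apply continuity_pt_filterlim, sq_nice. Qed.

Lemma Kf_cont x s : -1 < x < 1 -> -1 <= s <= 1 -> continuity_pt (Kf x) s.
Proof.
  intros Hx Hs. unfold Kf.
  apply continuity_pt_plus; [apply continuity_pt_plus|].
  - apply continuity_pt_mult. apply cpt_const.
    apply (continuity_pt_comp (fun s => 1 - x * s + sqrt (1 - x ^ 2) * sqrt (1 - s ^ 2)) ln).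
    + apply continuity_pt_plus. apply continuity_pt_minus. apply cpt_const.
      apply continuity_pt_mult. apply cpt_const. apply continuity_pt_id.
      apply continuity_pt_mult. apply cpt_const. apply sq_cpt.
    + apply continuity_pt_filterlim. apply continuous_ln. apply Wpos; auto.
  - apply sq_cpt.
  - apply continuity_pt_mult. apply cpt_const. apply continuity_pt_filterlim, acos_cont.
Qed.

Lemma HLR_cont x sg s : -1 < x < 1 -> -1 <= s <= 1 -> 0 < sg * (s - x) ->
  continuity_pt (fun s => sqrt (1 - x^2) * ln (sg * (s - x)) + Kf x s) s.
Proof.
  intros Hx Hs Hsg. apply continuity_pt_plus; [|apply Kf_cont; auto].
  apply continuity_pt_mult. apply cpt_const.
  apply (continuity_pt_comp (fun s => sg * (s - x)) ln).
  - apply continuity_pt_mult. apply cpt_const. apply continuity_pt_minus. apply continuity_pt_id. apply cpt_const.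
  - apply continuity_pt_filterlim. apply continuous_ln. auto.
Qed.

Lemma div_cont f x z : nice f -> z <> x -> continuous (fun s => f s / (s - x)) z.
Proof.
  intros Hf Hz.
  apply (continuous_mult f (fun s => / (s - x))). apply Hf.
  apply continuous_Rinv_comp. apply continuity_pt_filterlim.
  apply continuity_pt_minus. apply continuity_pt_id. apply cpt_const. lra.
Qed.

Lemma CPV_base x : -1 < x < 1 -> is_CPV (P 0) x (- PI * x).
Proof.
  intros Hx. unfold is_CPV.
  set (c := sqrt (1 - x^2)).
  set (HL := fun s => c * ln ((-1) * (s - x)) + Kf x s).
  set (HR := fun s => c * ln (1 * (s - x)) + Kf x s).
  apply filterlim_ext_loc with (fun e => Kf x (x - e) - Kf x (x + e) - x * PI).
  - apply filter_imp with (fun e => 0 < e < Rmin (1 - x) (1 + x)).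
    2:{ apply at_right_small. apply Rmin_glb_lt; lra. }
    intros e He. pose proof (Rmin_l (1-x) (1+x)). pose proof (Rmin_r (1-x) (1+x)).
    unfold pv_trunc.
    assert (IL : is_RInt (fun s => P 0 s / (s - x)) (-1) (x - e) (HL (x - e) - HL (-1))).
    { apply FTCo. lra.
      - intros s Hs. apply continuity_pt_filterlim. apply HLR_cont; auto; lra.
      - intros s Hs. apply HK_derive; auto; lra.
      - intros s Hs. apply div_cont. apply P_nice. lra. }
    assert (IR : is_RInt (fun s => P 0 s / (s - x)) (x + e) 1 (HR 1 - HR (x + e))).
    { apply FTCo. lra.
      - intros s Hs. apply continuity_pt_filterlim. apply HLR_cont; auto; lra.
      - intros s Hs. apply HK_derive; auto; lra.
      - intros s Hs. apply div_cont. apply P_nice. lra. }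
    rewrite (is_RInt_unique _ _ _ _ IL), (is_RInt_unique _ _ _ _ IR).
    unfold HL, HR.
    replace (-1 * (x - e - x)) with e by ring.
    replace (1 * (x + e - x)) with e by ring.
    replace (-1 * (-1 - x)) with (1 + x) by ring.
    replace (1 * (1 - x)) with (1 - x) by ring.
    unfold Kf. fold c.
    replace (1 - (-1) ^ 2) with 0 by ring. replace (1 - 1 ^ 2) with 0 by ring.
    rewrite sqrt_0, acos_1, (acos_lem1 (-1)) by lra.
    replace (1 - x * -1 + c * 0) with (1 + x) by ring.
    replace (1 - x * 1 + c * 0) with (1 - x) by ring.
    ring.
  - apply at_right_of_locally.
    replace (- PI * x) with (Kf x (x - 0) - Kf x (x + 0) - x * PI)
      by (rewrite Rminus_0_r, Rplus_0_r; ring).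
    apply (proj1 (continuity_pt_filterlim (fun e => Kf x (x - e) - Kf x (x + e) - x * PI) 0)).
    apply continuity_pt_minus; [apply continuity_pt_minus|apply cpt_const].
    + apply (continuity_pt_comp (fun e => x - e) (Kf x)).
      apply continuity_pt_minus. apply cpt_const. apply continuity_pt_id.
      apply Kf_cont; auto. rewrite Rminus_0_r; lra.
    + apply (continuity_pt_comp (fun e => x + e) (Kf x)).
      apply continuity_pt_plus. apply cpt_const. apply continuity_pt_id.
      apply Kf_cont; auto. rewrite Rplus_0_r; lra.
Qed.

Lemma sin_nPI n : sin (INR n * PI) = 0.
Proof.
  induction n. simpl. rewrite Rmult_0_l. apply sin_0.
  rewrite S_INR. replace ((INR n + 1) * PI) with (INR n * PI + PI) by ring.
  rewrite neg_sin, IHn. ring.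
Qed.

Lemma scal_R (a b : R) : scal a b = a * b.
Proof. reflexivity. Qed.

Definition hk (k : nat) (t : R) : R :=
  match k with O => t | S j => sin (INR (S j) * t) / INR (S j) end.

Definition gk (k : nat) (t : R) : R := - (1/2) * (hk k t - sin (INR (k + 2) * t) / INR (k + 2)).

Lemma INR_pos n : 0 < INR (S n).
Proof. apply lt_0_INR. lia. Qed.

Lemma gk_derive k t : is_derive (gk k) t (- (1/2) * (cos (INR k * t) - cos (INR (k + 2) * t))).
Proof.
  assert (H2 : INR (k + 2) <> 0) by (replace (k+2)%nat with (S (S k)) by lia; apply Rgt_not_eq, INR_pos).
  unfold gk. destruct k as [|n].
  - change (hk 0) with (fun t : R => t). cbv beta. replace (INR 0) with 0 by reflexivity.
    revert H2. generalize (INR (0 + 2)) as b. intros b Hb.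
    auto_derive. auto. rewrite Rmult_0_l, cos_0. field. auto.
  - change (hk (S n)) with (fun t => sin (INR (S n) * t) / INR (S n)). cbv beta.
    assert (INR (S n) <> 0) by (apply Rgt_not_eq, INR_pos).
    revert H2 H. generalize (INR (S n + 2)) as b. generalize (INR (S n)) as a. intros a b Hb Ha.
    auto_derive. auto. field. auto.
Qed.

Lemma gk_cont k t : continuity_pt (gk k) t.
Proof. apply continuity_pt_filterlim. apply (ex_derive_continuous (V := R_NormedModule)). eexists. apply gk_derive. Qed.

Lemma int_P k : is_RInt (P k) (-1) 1 (match k with O => PI / 2 | _ => 0 end).
Proof.
  assert (E : (match k with O => PI / 2 | _ => 0 end) = gk k (acos 1) - gk k (acos (-1))).
  { rewrite acos_1, (acos_lem1 (-1)) by lra. unfold gk. rewrite !Rmult_0_r, sin_0.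
    rewrite (sin_nPI (k+2)). destruct k as [|n].
    - change (hk 0 0) with 0. change (hk 0 PI) with PI. field. simpl; lra.
    - change (hk (S n) 0) with (sin (INR (S n) * 0) / INR (S n)).
      change (hk (S n) PI) with (sin (INR (S n) * PI) / INR (S n)).
      rewrite Rmult_0_r, sin_0, sin_nPI. field. split; [replace (S n + 2)%nat with (S (S (S n))) by lia|]; apply Rgt_not_eq, INR_pos. }
  cut (is_RInt (P k) (-1) 1 (gk k (acos 1) - gk k (acos (-1)))).
  { intros HH. rewrite <- E in HH. exact HH. }
  apply (FTCo (fun s => gk k (acos s))). lra.
  - intros s Hs. apply continuity_pt_filterlim.
    apply (continuity_pt_comp acos (gk k)). apply continuity_pt_filterlim, acos_cont. apply gk_cont.
  - intros s Hs.
    assert (H := is_derive_comp (gk k) acos s _ _ (gk_derive k (acos s)) (is_derive_acos s Hs)).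
    assert (Heq : @eq R (scal (-1 / sqrt (1 - s ^ 2))
       (- (1 / 2) * (cos (INR k * acos s) - cos (INR (k + 2) * acos s)))) (P k s)).
    { rewrite scal_R.
      rewrite (P_trig k s) by lra.
      rewrite (sqrt_sin s) by lra.
      set (t := acos s).
      assert (Hw : 0 < sin t).
      { unfold t. rewrite <- sqrt_sin by lra. apply sqrt_lt_R0; nra. }
      replace (INR (k + 2) * t) with (INR (S k) * t + t) by (rewrite plus_INR, S_INR; simpl; ring).
      replace (INR k * t) with (INR (S k) * t - t) by (rewrite S_INR; ring).
      rewrite cos_plus, cos_minus. field. lra. }
    rewrite <- Heq. exact H.
  - intros s Hs. apply P_nice.
Qed.

Lemma CPV_val f x A B : is_CPV f x A -> A = B -> is_CPV f x B.
Proof. intros H ->; exact H. Qed.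

Lemma CPV_P0 x : -1 < x < 1 -> is_CPV (P 0) x (- PI * cos (INR 1 * acos x)).
Proof.
  intros Hx.
  apply CPV_val with (- PI * x). apply CPV_base; auto.
  replace (INR 1) with 1 by reflexivity. rewrite Rmult_1_l, cos_acos by lra. ring.
Qed.

Lemma CPV_P1 x : -1 < x < 1 -> is_CPV (P 1) x (- PI * cos (INR 2 * acos x)).
Proof.
  intros Hx.
  apply CPV_val with (2 * (PI / 2) + 2 * x * (- PI * cos (INR 1 * acos x)) - 0).
  + apply (CPV_step (fun _ => 0) (P 0) (P 1) x _ _ (PI/2)).
    * intros z; apply continuous_const.
    * apply P_nice.
    * exact Hx.
    * intros s. rewrite P_1. ring.
    * apply CPV_P0, Hx.
    * apply CPV_zero.
    * apply (int_P 0).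
  + replace (INR 2) with 2 by reflexivity. replace (INR 1) with 1 by reflexivity.
    rewrite Rmult_1_l, cos_2a_cos, cos_acos by lra. field.
Qed.

Lemma CPV_PstepA j x : -1 < x < 1 ->
  is_CPV (P j) x (- PI * cos (INR (S j) * acos x)) ->
  is_CPV (P (S j)) x (- PI * cos (INR (S (S j)) * acos x)) ->
  is_CPV (P (S (S j))) x (2 * 0 + 2 * x * (- PI * cos (INR (S (S j)) * acos x)) - (- PI * cos (INR (S j) * acos x))).
Proof.
  intros Hx IH1 IH2.
  apply (CPV_step (P j) (P (S j)) (P (S (S j))) x _ _ 0).
    + apply P_nice.
    + apply P_nice.
    + exact Hx.
    + intros s; apply P_SS.
    + exact IH2.
    + exact IH1.
    + apply (int_P (S j)).
Qed.

Lemma val_step (x t a : R) : cos t = x ->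
  2 * 0 + 2 * x * (- PI * cos ((a + 1) * t)) - - PI * cos (a * t) = - PI * cos ((a + 2) * t).
Proof.
  intros Ht. rewrite <- Ht.
  replace ((a + 2) * t) with ((a + 1) * t + t) by ring.
  replace (a * t) with ((a + 1) * t - t) by ring.
  rewrite cos_plus, cos_minus. generalize ((a + 1) * t). intros u. ring.
Qed.

Lemma CPV_Pstep j x : -1 < x < 1 ->
  is_CPV (P j) x (- PI * cos (INR (S j) * acos x)) ->
  is_CPV (P (S j)) x (- PI * cos (INR (S (S j)) * acos x)) ->
  is_CPV (P (S (S j))) x (- PI * cos (INR (S (S (S j))) * acos x)).
Proof.
  intros Hx IH1 IH2.
  apply CPV_val with (2 * 0 + 2 * x * (- PI * cos (INR (S (S j)) * acos x)) - (- PI * cos (INR (S j) * acos x))).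
  - apply CPV_PstepA; auto.
  - pose proof (val_step x (acos x) (INR (S j)) (cos_acos x ltac:(lra))) as E2.
    assert (E3 : INR (S (S j)) = INR (S j) + 1) by apply S_INR.
    assert (E4 : INR (S (S (S j))) = INR (S j) + 2) by (rewrite (S_INR (S (S j))), E3; ring).
    rewrite E4, E3. exact E2.
Qed.

Lemma CPV_P k x : -1 < x < 1 -> is_CPV (P k) x (- PI * cos (INR (S k) * acos x)).
Proof.
  intros Hx.
  assert (forall k, is_CPV (P k) x (- PI * cos (INR (S k) * acos x)) /\
                    is_CPV (P (S k)) x (- PI * cos (INR (S (S k)) * acos x))).
  { intros j; induction j as [|j [IH1 IH2]].
    - split; [apply CPV_P0 | apply CPV_P1]; exact Hx.
    - split; [exact IH2|]. apply CPV_Pstep; assumption. }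
  exact (proj1 (H k)).
Qed.

Lemma sin_shift z m : sin (z - INR m * PI) = (-1) ^ m * sin z.
Proof.
  induction m.
  - simpl. replace (z - 0 * PI) with z by ring. ring.
  - rewrite S_INR. replace (z - (INR m + 1) * PI) with ((z - INR m * PI) - PI) by ring.
    rewrite sin_minus, sin_PI, cos_PI, IHm. simpl. ring.
Qed.

Lemma phase m y : (1 <= m)%nat -> sin (y - INR (2 * m - 1) * (PI / 2)) = (-1) ^ m * cos y.
Proof.
  intros Hm. rewrite minus_INR by lia. rewrite mult_INR.
  replace (y - (INR 2 * INR m - INR 1) * (PI / 2)) with ((y + PI / 2) - INR m * PI)
    by (simpl; field).
  rewrite sin_shift, sin_plus, sin_PI2, cos_PI2. ring.
Qed.

Definition cc (m j : nat) : R := (-1) ^ m * (1 / 2) ^ (2 * m - 1) * ((-1) ^ j * bin (2 * m - 1) j).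

Lemma D_expand m n s : (1 <= m)%nat -> (2 * m + 1 <= n)%nat -> -1 <= s <= 1 ->
  chebT n s * ((1 - s ^ 2) ^ (m - 1) * sqrt (1 - s ^ 2)) =
  sum_f_R0 (fun j => cc m j * P (n - 2 * m + 2 * j) s) (2 * m - 1).
Proof.
  intros Hm Hn Hs.
  set (p := (2 * m - 1)%nat).
  set (t := acos s).
  rewrite (sum_eq _ (fun j => ((-1) ^ j * bin p j * sin ((INR n - INR p + 2 * INR j) * t)) * ((-1) ^ m * (1 / 2) ^ p))).
  2:{ intros j Hj. unfold cc. fold p. rewrite P_trig by lra. fold t.
      assert (E : INR (S (n - 2 * m + 2 * j)) = INR n - INR p + 2 * INR j).
      { assert (E1 : (S (n - 2 * m + 2 * j) + p = n + 2 * j)%nat) by (unfold p; lia).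
        apply (f_equal INR) in E1. rewrite !plus_INR, mult_INR in E1. simpl (INR 2) in E1. lra. }
      rewrite E. ring. }
  rewrite <- scal_sum, trig_sum. unfold p. rewrite phase by lia. fold p.
  assert (Hsq : sqrt (1 - s ^ 2) = sin t) by (apply sqrt_sin; lra).
  assert (Hsq2 : 1 - s ^ 2 = sin t ^ 2).
  { rewrite <- Hsq. rewrite pow2_sqrt; [ring|nra]. }
  unfold chebT. fold t. rewrite Hsq, Hsq2.
  rewrite <- pow_mult.
  replace (sin t ^ (2 * (m - 1)) * sin t) with (sin t ^ p) by (unfold p; replace (2 * m - 1)%nat with (S (2 * (m - 1))) by lia; simpl; ring).
  assert (Ep : (1/2) ^ p * 2 ^ p = 1) by (rewrite <- Rpow_mult_distr; replace (1/2*2) with 1 by field; apply pow1).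
  assert (Em : (-1) ^ m * (-1) ^ m = 1) by (rewrite <- Rpow_mult_distr; replace (-1 * -1) with 1 by ring; apply pow1).
  generalize (sin t ^ p) (cos (INR n * t)) ((1/2)^p) (2^p) ((-1)^m) Ep Em.
  intros a b c d e H1 H2.
  replace (e * c * (d * a * (e * b))) with ((c * d) * (e * e) * (b * a)) by ring.
  rewrite H1, H2. ring.
Qed.

Lemma nice_sum (F : nat -> R -> R) (c : nat -> R) N :
  (forall j, nice (F j)) -> nice (fun s => sum_f_R0 (fun j => c j * F j s) N).
Proof.
  intros HF. apply nice_cpt. intros x. induction N.
  - simpl. apply continuity_pt_mult. apply cpt_const. apply continuity_pt_filterlim, HF.
  - change (continuity_pt (fun s => sum_f_R0 (fun j => c j * F j s) N + c (S N) * F (S N) s) x).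
    apply continuity_pt_plus. exact IHN.
    apply continuity_pt_mult. apply cpt_const. apply continuity_pt_filterlim, HF.
Qed.

Lemma CPV_sum (F : nat -> R -> R) (c v : nat -> R) x N : -1 < x < 1 ->
  (forall j, nice (F j)) -> (forall j, is_CPV (F j) x (v j)) ->
  is_CPV (fun s => sum_f_R0 (fun j => c j * F j s) N) x (sum_f_R0 (fun j => c j * v j) N).
Proof.
  intros Hx HF HV. induction N.
  - simpl. apply CPV_val with (c 0%nat * v 0%nat + 0 * v 0%nat); [|ring].
    apply CPV_ext with (fun s => c 0%nat * F 0%nat s + 0 * F 0%nat s); auto.
    intros s _. ring.
    apply CPV_lin; auto.
  - change (is_CPV (fun s => sum_f_R0 (fun j => c j * F j s) N + c (S N) * F (S N) s) x
       (sum_f_R0 (fun j => c j * v j) N + c (S N) * v (S N))).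
    apply CPV_val with (1 * sum_f_R0 (fun j => c j * v j) N + c (S N) * v (S N)); [|ring].
    apply CPV_ext with (fun s => 1 * sum_f_R0 (fun j => c j * F j s) N + c (S N) * F (S N) s); auto.
    intros s _. ring.
    apply CPV_lin; auto. apply nice_sum; auto.
Qed.

Definition Gf (m n : nat) (x : R) : R :=
  sum_f_R0 (fun j => cc m j * (- PI * cos (INR (S (n - 2 * m + 2 * j)) * acos x))) (2 * m - 1).

Definition Df (n m : nat) (s : R) : R := chebT n s * ((1 - s ^ 2) ^ (m - 1) * sqrt (1 - s ^ 2)).

Lemma CPV_D m n x : (1 <= m)%nat -> (2 * m + 1 <= n)%nat -> -1 < x < 1 ->
  is_CPV (Df n m) x (Gf m n x).
Proof.
  intros Hm Hn Hx.
  apply CPV_ext with (fun s => sum_f_R0 (fun j => cc m j * P (n - 2 * m + 2 * j) s) (2 * m - 1)); auto.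
  - intros s Hs. unfold Df. symmetry. apply D_expand; auto.
  - apply (CPV_sum (fun j => P (n - 2 * m + 2 * j)) (cc m) (fun j => - PI * cos (INR (S (n - 2 * m + 2 * j)) * acos x))); auto.
    + intros j; apply P_nice.
    + intros j; apply CPV_P; auto.
Qed.

Lemma CPV_unique D x a : is_CPV D x a -> CPV D x = a.
Proof.
  intros Ha.
  assert (Hu : forall u v : R, is_CPV D x u -> is_CPV D x v -> close u v).
  { intros u v Hu Hv.
    rewrite (@filterlim_locally_unique R R_AbsRing R_NormedModule (at_right 0)
      (Proper_StrongProper _ (at_right_proper_filter 0)) _ u v Hu Hv). apply close_refl. }
  assert (Hc := iota_correct_weak (T := R_CompleteSpace) (is_CPV D x) Hu a Ha).
  apply (eq_close (K := R_AbsRing) (V := R_NormedModule)). exact Hc.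
Qed.

Lemma CPV_eq m n x : (1 <= m)%nat -> (2 * m + 1 <= n)%nat -> -1 < x < 1 ->
  CPV (Df n m) x = Gf m n x.
Proof.
  intros Hm Hn Hx. apply CPV_unique. apply CPV_D; auto.
Qed.

Lemma deriv_sum (f : nat -> R -> R) (d : nat -> R) r N :
  (forall j, is_derive (f j) r (d j)) ->
  is_derive (fun x => sum_f_R0 (fun j => f j x) N) r (sum_f_R0 d N).
Proof.
  intros Hd. induction N.
  - exact (Hd 0%nat).
  - exact (is_derive_plus _ _ _ _ _ IHN (Hd (S N))).
Qed.

Lemma deriv_term a K r : -1 < r < 1 ->
  is_derive (fun x => a * (- PI * cos (K * acos x))) r (- a * PI * K * sin (K * acos r) / sqrt (1 - r ^ 2)).
Proof.
  intros Hr.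
  evar (dO : R).
  assert (H1 : is_derive (fun t => a * (- PI * cos (K * t))) (acos r) dO).
  { auto_derive. auto. unfold dO. reflexivity. }
  assert (H := is_derive_comp _ acos r _ _ H1 (is_derive_acos r Hr)).
  assert (Heq : @eq R (scal (-1 / sqrt (1 - r ^ 2)) dO) (- a * PI * K * sin (K * acos r) / sqrt (1 - r ^ 2))).
  { rewrite scal_R. unfold dO.
    assert (Hs : 0 < sqrt (1 - r ^ 2)) by (apply sqrt_lt_R0; nra).
    generalize (sqrt (1 - r ^ 2)) Hs. generalize (sin (K * acos r)). intros u v Hv. field. lra. }
  rewrite <- Heq. exact H.
Qed.

Theorem mainTheorem3 (m n : nat) (hm : (1 <= m)%nat) (hn : (2 * m + 1 <= n)%nat)
  (r : R) (hr : Rabs r < 1) :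
  is_hadamard2
    (fun s => chebT n s * ((1 - s ^ 2) ^ (m - 1) * sqrt (1 - s ^ 2)))
    r
    (PI * (-1) ^ (m + 1)%nat * (1 / 2) ^ (2 * m - 1)%nat *
     sum_f_R0 (fun j => (-1) ^ j * Binomial.C (2 * m - 1)%nat j *
                        (INR n + 1 - 2 * INR m + 2 * INR j) *
                        chebU (n - 2 * m + 2 * j)%nat r) (2 * m - 1)%nat).
Proof.
  assert (Hr : -1 < r < 1) by (apply Rabs_def2 in hr; lra).
  split.
  - intros x Hx. exists (Gf m n x). exact (CPV_D m n x hm hn Hx).
  - apply is_derive_ext_loc with (Gf m n).
    + exists (mkposreal (1 - Rabs r) ltac:(lra)). intros y Hy.
      unfold ball in Hy; simpl in Hy; unfold AbsRing_ball, abs, minus, plus, opp in Hy; simpl in Hy.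
      symmetry. apply (CPV_eq m n y hm hn).
      assert (Rabs y < 1).
      { replace y with (r + (y - r)) by ring. eapply Rle_lt_trans. apply Rabs_triang.
        replace (y + - r) with (y - r) in Hy by ring. lra. }
      apply Rabs_def2 in H. lra.
    + assert (HD := deriv_sum (fun j x => cc m j * (- PI * cos (INR (S (n - 2 * m + 2 * j)) * acos x)))
         (fun j => - cc m j * PI * INR (S (n - 2 * m + 2 * j)) * sin (INR (S (n - 2 * m + 2 * j)) * acos r) / sqrt (1 - r ^ 2))
         r (2 * m - 1) (fun j => deriv_term _ _ r Hr)).
      match goal with |- is_derive _ _ ?L => assert (Heq : @eq R (sum_f_R0 (fun j => - cc m j * PI * INR (S (n - 2 * m + 2 * j)) * sin (INR (S (n - 2 * m + 2 * j)) * acos r) / sqrt (1 - r ^ 2)) (2 * m - 1)) L) end.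
      { rewrite scal_sum. apply sum_eq. intros j Hj.
        unfold cc, chebU. rewrite bin_C by lia.
        assert (Ek : INR (S (n - 2 * m + 2 * j)) = INR n + 1 - 2 * INR m + 2 * INR j).
        { assert (E1 : (S (n - 2 * m + 2 * j) + 2 * m = n + 1 + 2 * j)%nat) by lia.
          apply (f_equal INR) in E1. rewrite !plus_INR, !mult_INR in E1. simpl (INR 2) in E1. simpl (INR 1) in E1. lra. }
        assert (Ek2 : INR (n - 2 * m + 2 * j) + 1 = INR n + 1 - 2 * INR m + 2 * INR j) by (rewrite <- S_INR; exact Ek).
        rewrite Ek, Ek2. rewrite <- (sqrt_sin r) by lra.
        rewrite pow_add. simpl (pow (-1) 1).
        assert (Hs : 0 < sqrt (1 - r ^ 2)) by (apply sqrt_lt_R0; nra).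
        generalize (sqrt (1 - r ^ 2)) Hs. intros w Hw.
        generalize (sin ((INR n + 1 - 2 * INR m + 2 * INR j) * acos r)) (INR n + 1 - 2 * INR m + 2 * INR j)
          ((-1) ^ m) ((1/2) ^ (2 * m - 1)) ((-1) ^ j) (Binomial.C (2 * m - 1) j).
        intros. field. lra. }
      rewrite <- Heq. exact HD.
Qed.
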